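(* Let $p$ be an odd prime, $\alpha>1$ any integer with $\gcd(p,\alpha)=1$, and $\gamma=\operatorname{ord}_p(\alpha)$. Then for all positive integers $a,n$ with $a\geq \gamma p$, $$S_p^n(a)\leq 8\,\big(\log_p a\big)^{n-1}\, a^{\log_p\left(\frac{p+1}{2}\right)} .$$
   Context: A base-$p$ digit $d\in\{0,\dots,p-1\}$ is called small if $d<p/2$ and large otherwise. For integers $a,n\ge1$, $S_p^n(a)=\#\{0\le s<a : \text{the base-}p\text{ representation of }\alpha^s\text{ contains fewer than } n \text{ large digits}\}$ (this depends on the fixed $\alpha$). *)

(* Defs.v *)
From Stdlib Require Import Arith Lia List Reals ZArith Znumtheory.
Import ListNotations.
Local Open Scope nat_scope.

(* Base-p digits of m (least significant first), p >= 2.  Fuel = m suffices. *)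
Fixpoint digits_aux (fuel p m : nat) : list nat :=
  match fuel with
  | 0 => []
  | S f => if Nat.eqb m 0 then [] else (m mod p) :: digits_aux f p (m / p)
  end.

Definition digits (p m : nat) : list nat := digits_aux m p m.

Definition is_large (p d : nat) : bool := Nat.leb p (2 * d).

Definition num_large (p m : nat) : nat :=
  length (filter (is_large p) (digits p m)).

Definition S_count (p alpha n a : nat) : nat :=
  length (filter (fun s => Nat.ltb (num_large p (alpha ^ s)) n) (seq 0 a)).

Definition is_mult_order (p alpha gamma : nat) : Prop :=
  0 < gamma /\ alpha ^ gamma mod p = 1 mod p /\
  (forall k, 0 < k < gamma -> alpha ^ k mod p <> 1 mod p).

Definition logb (p x : R) : R := ln x / ln p.

(* Main.v *)
Require Import Defs.
From Stdlib Require Import Arith Lia List Reals ZArith Znumtheory Lra.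
Import ListNotations.

Module MA.
Local Open Scope nat_scope.

Lemma prime_ge2 p : prime (Z.of_nat p) -> 2 <= p.
Proof. intros [H _]. lia. Qed.

Lemma zdiv_nat p a : 0 < p -> (Z.of_nat p | Z.of_nat a)%Z -> Nat.divide p a.
Proof.
  intros Hp [z Hz]. exists (Z.to_nat z).
  assert (0 <= z)%Z by nia.
  apply Nat2Z.inj. rewrite Nat2Z.inj_mul, Z2Nat.id; lia.
Qed.

Lemma euclidN p a b : prime (Z.of_nat p) -> Nat.divide p (a*b) ->
  Nat.divide p a \/ Nat.divide p b.
Proof.
  intros Hp [z Hz]. pose proof (prime_ge2 _ Hp).
  destruct (prime_mult _ Hp (Z.of_nat a) (Z.of_nat b)) as [H1|H1].
  - exists (Z.of_nat z). rewrite <- !Nat2Z.inj_mul, Hz. reflexivity.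
  - left. apply zdiv_nat; auto; lia.
  - right. apply zdiv_nat; auto; lia.
Qed.

Lemma not_div_pow p al k : prime (Z.of_nat p) -> Nat.gcd p al = 1 ->
  ~ Nat.divide p (al ^ k).
Proof.
  intros Hp Hg. pose proof (prime_ge2 _ Hp). induction k; simpl.
  - intros [z Hz]. destruct z; lia.
  - intros Hd. apply euclidN in Hd; auto. destruct Hd as [Hd|Hd]; auto.
    assert (Nat.divide p (Nat.gcd p al)) by (apply Nat.gcd_greatest; auto; apply Nat.divide_refl).
    rewrite Hg in H0. apply Nat.divide_1_r in H0. lia.
Qed.

Lemma cancel_pow p al s k m : prime (Z.of_nat p) -> Nat.gcd p al = 1 ->
  Nat.divide (p ^ k) (al ^ s * m) -> Nat.divide (p ^ k) m.
Proof.
  intros Hp Hg. pose proof (prime_ge2 _ Hp). revert m. induction k; intros m Hd.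
  - simpl. apply Nat.divide_1_l.
  - assert (Nat.divide p (al ^ s * m)).
    { eapply Nat.divide_trans; [|exact Hd]. exists (p ^ k). simpl. lia. }
    apply euclidN in H0; auto. destruct H0 as [H0|[m' Hm']].
    + exfalso. eapply not_div_pow; eauto.
    + subst m. assert (Nat.divide (p ^ k) m').
      { apply IHk. destruct Hd as [z Hz]. exists z.
        simpl in Hz. apply (Nat.mul_cancel_r _ _ p); [lia|]. nia. }
      destruct H0 as [z Hz]. exists z. simpl. nia.
Qed.

End MA.
Import MA.

Module MB.
Local Open Scope nat_scope.

Lemma L1 x i : exists Y, (1+x)^i = 1 + i*x + x*x*Y.
Proof.
  induction i as [|i [Y HY]].
  - exists 0. simpl. lia.
  - exists (Y + i + x*Y). rewrite Nat.pow_succ_r', HY. simpl. nia.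
Qed.

Fixpoint T (i : nat) : nat := match i with 0 => 0 | S i' => T i' + i' end.

Lemma T2 i : 2 * T i + i = i * i.
Proof. induction i; simpl; nia. Qed.

Lemma L1b x i : exists Z, (1+x)^i = 1 + i*x + T i*x*x + x*x*x*Z.
Proof.
  induction i as [|i [Y HY]].
  - exists 0. simpl. lia.
  - exists (Y + T i + x*Y). rewrite Nat.pow_succ_r', HY. simpl. nia.
Qed.

Lemma L3 p t w d K : prime (Z.of_nat p) -> 1 <= t -> ~ Nat.divide p w -> ~ Nat.divide p d ->
  (1 + p^t*w)^d <> 1 + p^(t+1)*K.
Proof.
  intros Hp Ht Hw Hd HE. pose proof (prime_ge2 _ Hp).
  destruct (L1 (p^t*w) d) as [Y HY]. rewrite HY in HE.
  destruct t as [|t']; [lia|]. set (q := p^t') in *.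
  assert (Hq : 0 < q) by (apply Nat.neq_0_lt_0, Nat.pow_nonzero; lia).
  replace (p ^ S t') with (p*q) in HE by (simpl; auto).
  replace (p ^ (S t' + 1)) with (p*p*q) in HE by (rewrite Nat.add_1_r; simpl; subst q; ring).
  assert (E : p * K = d * w + p * (q*w*w*Y)).
  { apply (Nat.mul_cancel_l _ _ (p*q)); [nia|]. nia. }
  assert (Nat.divide p (d*w)).
  { apply (Nat.divide_add_cancel_r _ (p * (q*w*w*Y))).
    - apply Nat.divide_factor_l.
    - rewrite Nat.add_comm, <- E. apply Nat.divide_factor_l. }
  apply euclidN in H0; auto. tauto.
Qed.

Lemma L2 p t w : prime (Z.of_nat p) -> Nat.odd p = true -> 1 <= t ->
  exists z, (1 + p^t*w)^p = 1 + p^(t+1)*(w + p*z).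
Proof.
  intros Hp Ho Ht. pose proof (prime_ge2 _ Hp).
  destruct (L1b (p^t*w) p) as [Z HZ].
  destruct (proj1 (Nat.odd_spec p) Ho) as [k Hk].
  assert (HT: T p = p * k) by (pose proof (T2 p); nia).
  destruct t as [|t']; [lia|]. set (q := p^t') in *.
  exists (k*q*w*w + q*q*w*w*w*Z).
  rewrite HZ, HT.
  replace (p ^ S t') with (p*q) by (simpl; auto).
  replace (p ^ (S t' + 1)) with (p*p*q) by (rewrite Nat.add_1_r; simpl; subst q; ring).
  ring.
Qed.

Lemma LTE p : prime (Z.of_nat p) -> Nat.odd p = true ->
  forall j t w d K, 1 <= t -> ~ Nat.divide p w ->
  (1 + p^t*w)^d = 1 + p^(t+j)*K -> Nat.divide (p^j) d.
Proof.
  intros Hp Ho. pose proof (prime_ge2 _ Hp).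
  induction j; intros t w d K Ht Hw HE.
  - apply Nat.divide_1_l.
  - assert (Hd : Nat.divide p d).
    { destruct (Nat.eq_dec (d mod p) 0) as [E|E].
      - apply Nat.mod_divide; lia.
      - exfalso. apply (L3 p t w d (p^j*K) Hp Ht Hw).
        + intros Hd. apply Nat.mod_divide in Hd; lia.
        + rewrite HE. f_equal. rewrite Nat.mul_assoc, <- Nat.pow_add_r. do 2 f_equal. lia. }
    destruct Hd as [d' ->].
    destruct (L2 p t w Hp Ho Ht) as [z Hz].
    assert (Hd' : Nat.divide (p^j) d').
    { apply (IHj (t+1) (w + p*z) d' K); [lia| |].
      - intros Hd. apply Hw. apply (Nat.divide_add_cancel_r _ (p*z)).
        + apply Nat.divide_factor_l.
        + rewrite Nat.add_comm; auto.
      - rewrite <- Hz, <- Nat.pow_mul_r, (Nat.mul_comm p d'), HE. do 3 f_equal. lia. }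
    destruct Hd' as [e ->]. exists e. simpl. ring.
Qed.

End MB.
Import MB.

Module MC.
Local Open Scope nat_scope.

Fixpoint blk (p j D : nat) : nat :=
  match j with 0 => 0 | S j' => (if is_large p (D mod p) then 1 else 0) + blk p j' (D / p) end.

Lemma blk_le_num p f m k : 2 <= p -> m <= f ->
  blk p k m <= length (filter (is_large p) (digits_aux f p m)).
Proof.
  intros Hp. revert m k. induction f; intros m k Hm.
  - assert (m = 0) by lia. subst. induction k; simpl; auto.
    rewrite Nat.Div0.mod_0_l, Nat.Div0.div_0_l. unfold is_large.
    destruct (Nat.leb_spec p (2*0)); [lia|]. simpl. auto.
  - simpl. destruct (Nat.eqb_spec m 0).
    + subst. clear IHf. induction k; simpl; auto.
      rewrite Nat.Div0.mod_0_l, Nat.Div0.div_0_l. unfold is_large.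
      destruct (Nat.leb_spec p (2*0)); [lia|]. simpl. auto.
    + destruct k; [simpl; lia|]. simpl.
      assert (m / p <= f).
      { assert (m / p < m) by (apply Nat.div_lt; lia). lia. }
      specialize (IHf (m/p) k H).
      destruct (is_large p (m mod p)); simpl; lia.
Qed.

Lemma blk_add p t j m : p <> 0 -> blk p (t+j) m = blk p t m + blk p j (m / p^t).
Proof.
  intros Hp. revert m. induction t; intros m; cbn [Nat.add blk Nat.pow].
  - rewrite Nat.div_1_r. auto.
  - rewrite IHt, Nat.Div0.div_div. lia.
Qed.

Lemma blk_mod p j D : p <> 0 -> blk p j (D mod p^j) = blk p j D.
Proof.
  intros Hp. revert D. induction j; intros D; simpl; auto.
  rewrite Nat.Div0.mod_mul_r.
  assert (Hlt : D mod p < p) by (apply Nat.mod_upper_bound; auto).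
  replace ((D mod p + p * ((D / p) mod p ^ j)) mod p) with (D mod p).
  2:{ rewrite (Nat.mul_comm p), Nat.Div0.mod_add, Nat.Div0.mod_mod; auto. }
  replace ((D mod p + p * ((D / p) mod p ^ j)) / p) with ((D / p) mod p ^ j).
  2:{ rewrite (Nat.mul_comm p), Nat.div_add by auto. rewrite (Nat.div_small (D mod p)); auto. }
  rewrite IHj. auto.
Qed.

Lemma blk_num p t j m : 2 <= p ->
  blk p j ((m / p^t) mod p^j) <= num_large p m.
Proof.
  intros Hp. rewrite blk_mod by lia.
  eapply Nat.le_trans; [|apply (blk_le_num p m m (t+j)); lia].
  rewrite blk_add by lia. lia.
Qed.

End MC.
Import MC.

Module MD.
Local Open Scope nat_scope.

Definition G p j n := filter (fun D => blk p j D <? n) (seq 0 (p^j)).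

Fixpoint B j n := match j with
  | 0 => match n with 0 => 0 | _ => 1 end
  | S j' => match n with 0 => 0 | S n' => B j' (S n') + B j' n' end end.

Lemma len_small p h : p + 1 = 2*h ->
  length (filter (fun d => negb (is_large p d)) (seq 0 p)) <= h.
Proof.
  intros E. eapply Nat.le_trans with (length (seq 0 h)); [|rewrite length_seq; lia].
  apply NoDup_incl_length. apply NoDup_filter, seq_NoDup.
  intros d Hd. apply filter_In in Hd. destruct Hd as [H1 H2].
  apply in_seq in H1. apply in_seq. unfold is_large in H2.
  destruct (Nat.leb_spec p (2*d)); simpl in H2; [discriminate|]. lia.
Qed.

Lemma len_large p h : p + 1 = 2*h ->
  length (filter (is_large p) (seq 0 p)) <= h.
Proof.
  intros E. eapply Nat.le_trans with (length (seq h (p - h))).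
  - apply NoDup_incl_length. apply NoDup_filter, seq_NoDup.
    intros d Hd. apply filter_In in Hd. destruct Hd as [H1 H2].
    apply in_seq in H1. apply in_seq. unfold is_large in H2.
    destruct (Nat.leb_spec p (2*d)); simpl in H2; [|discriminate]. lia.
  - rewrite length_seq. lia.
Qed.

Lemma G_bound p h : 2 <= p -> p + 1 = 2*h ->
  forall j n, length (G p j n) <= h^j * B j n.
Proof.
  intros Hp E. induction j; intros n.
  - unfold G. simpl. destruct n; simpl; lia.
  - destruct n.
      replace (length (G p (S j) 0)) with (length (@nil nat)); [simpl; lia|].
      unfold G. induction (seq 0 (p ^ S j)) as [|a l' IH']; [reflexivity|]. cbn [filter].
      destruct (blk p (S j) a <? 0) eqn:Ex; [apply Nat.ltb_lt in Ex; lia | exact IH'].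
    + set (l := G p (S j) (S n)).
      set (Sm := filter (fun d => negb (is_large p d)) (seq 0 p)).
      set (Lg := filter (is_large p) (seq 0 p)).
      assert (Hl : length (map (fun D => (D mod p, D / p)) l) <=
                   length (list_prod Sm (G p j (S n)) ++ list_prod Lg (G p j n))).
      { apply NoDup_incl_length.
        - apply NoDup_map_NoDup_ForallPairs.
          + intros x y _ _ Hxy. injection Hxy as H1 H2.
            rewrite (Nat.div_mod x p), (Nat.div_mod y p) by lia. congruence.
          + apply NoDup_filter, seq_NoDup.
        - intros [d D'] Hin. apply in_map_iff in Hin. destruct Hin as [D [HD HinD]].
          injection HD as Hd HD'. unfold l, G in HinD. apply filter_In in HinD.
          destruct HinD as [H1 H2]. apply in_seq in H1. apply Nat.ltb_lt in H2.
          simpl in H2. apply in_app_iff.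
          assert (Hdp : d < p) by (subst; apply Nat.mod_upper_bound; lia).
          assert (HD'lt : D' < p^j).
          { subst D'. apply Nat.Div0.div_lt_upper_bound. rewrite <- Nat.pow_succ_r'. lia. }
          rewrite Hd, HD' in H2.
          destruct (is_large p d) eqn:Ed.
          + right. apply in_prod.
            * unfold Lg. apply filter_In. split; auto. apply in_seq. lia.
            * unfold G. apply filter_In. split; [apply in_seq; lia|]. apply Nat.ltb_lt. lia.
          + left. apply in_prod.
            * unfold Sm. apply filter_In. split; [apply in_seq; lia|]. rewrite Ed. auto.
            * unfold G. apply filter_In. split; [apply in_seq; lia|]. apply Nat.ltb_lt. lia. }
      rewrite length_map, length_app, !length_prod in Hl.
      pose proof (len_small p h E). pose proof (len_large p h E).
      fold Sm in H. fold Lg in H0.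
      pose proof (IHj (S n)). pose proof (IHj n).
      pose proof (Nat.mul_le_mono _ _ _ _ H H1). pose proof (Nat.mul_le_mono _ _ _ _ H0 H2).
      unfold l in Hl. cbn [B]. rewrite Nat.pow_succ_r'. unfold l. rewrite <- Nat.mul_assoc, Nat.mul_add_distr_l, !Nat.mul_add_distr_l. lia.
Qed.

Lemma B_le j n : 1 <= j -> B j (S n) <= 2 * j^n.
Proof.
  intros Hj. induction Hj as [|j Hj IH] in n |- *.
  - rewrite Nat.pow_1_l. destruct n; simpl; lia.
  - destruct n.
    + simpl. destruct j; [lia|]. simpl. destruct j; simpl. lia.
      clear. induction j; simpl; lia.
    + cbn [B]. pose proof (IH (S n)). pose proof (IH n).
      assert (j ^ S n + j ^ n <= (S j)^(S n)).
      { rewrite !Nat.pow_succ_r'. assert (j^n <= (S j)^n) by (apply Nat.pow_le_mono_l; lia). nia. }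
      lia.
Qed.

End MD.
Import MD.

Module ME.
Local Open Scope nat_scope.

Lemma mod_eq_div a b M : M <> 0 -> b <= a -> a mod M = b mod M -> Nat.divide M (a - b).
Proof.
  intros HM Hba Hm. exists (a/M - b/M).
  pose proof (Nat.div_mod a M HM). pose proof (Nat.div_mod b M HM).
  assert (b/M <= a/M) by (apply Nat.Div0.div_le_mono; auto).
  rewrite Nat.mul_sub_distr_r. nia.
Qed.

Lemma key_inj p al ga t w j s1 s2 :
  prime (Z.of_nat p) -> Nat.odd p = true -> Nat.gcd p al = 1 -> 0 < ga -> 1 <= t ->
  ~ Nat.divide p w -> al ^ ga = 1 + p^t * w ->
  s1 <= s2 -> s1 / (ga * p^j) = s2 / (ga * p^j) -> s1 mod ga = s2 mod ga ->
  (al ^ s1 / p^t) mod p^j = (al ^ s2 / p^t) mod p^j -> s1 = s2.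
Proof.
  intros Hp Ho Hg Hga Ht Hw Hb Hle Hq Hr HD.
  pose proof (prime_ge2 _ Hp).
  assert (Hpj : 0 < p^j) by (apply Nat.neq_0_lt_0, Nat.pow_nonzero; lia).
  assert (Hpt : 0 < p^t) by (apply Nat.neq_0_lt_0, Nat.pow_nonzero; lia).
  set (P := ga * p^j) in *.
  assert (HP : 0 < P) by (unfold P; nia).
  pose proof (Nat.div_mod s1 ga ltac:(lia)) as E1.
  pose proof (Nat.div_mod s2 ga ltac:(lia)) as E2.
  set (d := s2 / ga - s1 / ga).
  assert (Hs2 : s2 = s1 + ga * d).
  { assert (s1 / ga <= s2 / ga) by (apply Nat.Div0.div_le_mono; auto). unfold d. nia. }
  assert (Hd : d < p^j).
  { pose proof (Nat.div_mod s1 P ltac:(lia)). pose proof (Nat.div_mod s2 P ltac:(lia)).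
    pose proof (Nat.mod_upper_bound s1 P ltac:(lia)). pose proof (Nat.mod_upper_bound s2 P ltac:(lia)).
    assert (ga * d < ga * p^j) by (unfold P in *; nia). nia. }
  destruct (L1 (p^t*w) d) as [Y HY].
  assert (Ha2 : al ^ s2 = al ^ s1 * (1 + p^t*w)^d).
  { rewrite Hs2, Nat.pow_add_r, Nat.pow_mul_r, Hb. auto. }
  assert (Hlow : al ^ s2 mod p^t = al ^ s1 mod p^t).
  { rewrite Ha2, HY.
    replace (al ^ s1 * (1 + d * (p ^ t * w) + p ^ t * w * (p ^ t * w) * Y))
      with (al ^ s1 + (al^s1 * (d*w + w * (p^t*w) * Y)) * p^t) by ring.
    apply Nat.Div0.mod_add. }
  assert (Hfull : al ^ s2 mod p^(t+j) = al ^ s1 mod p^(t+j)).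
  { rewrite Nat.pow_add_r, !Nat.Div0.mod_mul_r. rewrite Hlow, HD. auto. }
  assert (Hge : al ^ s1 <= al ^ s2).
  { rewrite Ha2. assert (1 <= (1 + p^t*w)^d) by (apply Nat.neq_0_lt_0, Nat.pow_nonzero; lia). nia. }
  apply mod_eq_div in Hfull; [|apply Nat.pow_nonzero; lia|auto].
  rewrite Ha2 in Hfull.
  replace (al ^ s1 * (1 + p ^ t * w) ^ d - al ^ s1) with (al ^ s1 * ((1 + p ^ t * w) ^ d - 1)) in Hfull
    by (rewrite Nat.mul_sub_distr_l; lia).
  apply cancel_pow in Hfull; auto.
  destruct Hfull as [K HK].
  assert (HE : (1 + p^t*w)^d = 1 + p^(t+j) * K).
  { assert (1 <= (1 + p^t*w)^d) by (apply Nat.neq_0_lt_0, Nat.pow_nonzero; lia). lia. }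
  apply (LTE p Hp Ho j t w d K Ht Hw) in HE.
  destruct HE as [e He]. assert (e = 0) by nia. subst e. simpl in He. lia.
Qed.

Lemma count_bound p al ga t w j n a :
  prime (Z.of_nat p) -> Nat.odd p = true -> Nat.gcd p al = 1 -> 0 < ga -> 1 <= t ->
  ~ Nat.divide p w -> al ^ ga = 1 + p^t * w ->
  length (filter (fun s => num_large p (al ^ s) <? n) (seq 0 a)) <=
  ((a - 1) / (ga * p^j) + 1) * ga * length (G p j n).
Proof.
  intros Hp Ho Hg Hga Ht Hw Hb. pose proof (prime_ge2 _ Hp).
  assert (Hpj : 0 < p^j) by (apply Nat.neq_0_lt_0, Nat.pow_nonzero; lia).
  set (key := fun s => ((s / (ga * p^j), s mod ga), (al ^ s / p^t) mod p^j)).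
  set (l := filter (fun s => num_large p (al ^ s) <? n) (seq 0 a)).
  assert (length (map key l) <=
          length (list_prod (list_prod (seq 0 ((a-1)/(ga*p^j) + 1)) (seq 0 ga)) (G p j n))).
  { apply NoDup_incl_length.
    - apply NoDup_map_NoDup_ForallPairs.
      + intros x y _ _ Hxy. unfold key in Hxy. injection Hxy as H1 H2 H3.
        destruct (Nat.le_ge_cases x y).
        * exact (key_inj p al ga t w j x y Hp Ho Hg Hga Ht Hw Hb H0 H1 H2 H3).
        * symmetry. exact (key_inj p al ga t w j y x Hp Ho Hg Hga Ht Hw Hb H0 (eq_sym H1) (eq_sym H2) (eq_sym H3)).
      + apply NoDup_filter, seq_NoDup.
    - intros k Hk. apply in_map_iff in Hk. destruct Hk as [s [<- Hs]].
      unfold l in Hs. apply filter_In in Hs. destruct Hs as [H1 H2].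
      apply in_seq in H1. apply Nat.ltb_lt in H2. unfold key.
      apply in_prod; [apply in_prod|].
      + apply in_seq. split; [lia|].
        assert (s / (ga*p^j) <= (a-1)/(ga*p^j)) by (apply Nat.Div0.div_le_mono; lia). lia.
      + apply in_seq. split; [lia|]. simpl. apply Nat.mod_upper_bound. lia.
      + unfold G. apply filter_In. split.
        * apply in_seq. split; [lia|]. simpl. apply Nat.mod_upper_bound. lia.
        * apply Nat.ltb_lt. eapply Nat.le_lt_trans; [apply blk_num; lia|]. auto. }
  rewrite length_map, !length_prod, !length_seq in H0. exact H0.
Qed.

End ME.
Import ME.

Module MF.
Local Open Scope R_scope.

Lemma lnle x y : 0 < x -> x <= y -> ln x <= ln y.
Proof. intros Hx [H|H]; [left; apply ln_increasing; auto | subst; lra]. Qed.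

Lemma exple x y : x <= y -> exp x <= exp y.
Proof. intros [H|H]; [left; apply exp_increasing; auto | subst; lra]. Qed.

Lemma Rdiv_le_0_compat a b : 0 <= a -> 0 < b -> 0 <= a / b.
Proof. intros. unfold Rdiv. apply Rmult_le_pos; auto. left. apply Rinv_0_lt_compat; auto. Qed.

Lemma convex_exp v y : 0 <= v <= 1 -> exp (v*y) <= v * exp y + (1 - v).
Proof.
  intros Hv. assert (HE : 0 < exp (v*y)) by apply exp_pos.
  assert (h1 : exp (v*y) * (1 + (1-v)*y) <= exp y).
  { replace y with (v*y + (1-v)*y) at 3 by ring. rewrite exp_plus.
    apply Rmult_le_compat_l; [lra|]. apply exp_ineq1_le. }
  assert (h2 : exp (v*y) * (1 - v*y) <= 1).
  { replace 1 with (exp (v*y + - (v*y))) at 2 by (rewrite Rplus_opp_r; apply exp_0).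
    rewrite exp_plus. apply Rmult_le_compat_l; [lra|]. 
    replace (1 - v*y) with (1 + - (v*y)) by ring. apply exp_ineq1_le. }
  assert (h3 : v * (exp (v*y) * (1 + (1-v)*y)) <= v * exp y) by (apply Rmult_le_compat_l; lra).
  assert (h4 : (1-v) * (exp (v*y) * (1 - v*y)) <= (1-v) * 1) by (apply Rmult_le_compat_l; lra).
  assert (exp (v*y) = v * (exp (v*y) * (1 + (1-v)*y)) + (1-v) * (exp (v*y) * (1 - v*y))) by ring.
  lra.
Qed.

Lemma jensen P x : 1 < P -> 1 <= x <= P ->
  1 + x <= 2 * exp (ln ((P+1)/2) / ln P * ln x).
Proof.
  intros HP Hx. set (H := (P+1)/2). assert (HH : 1 < H) by (unfold H; lra).
  assert (lP : 0 < ln P) by (rewrite <- ln_1; apply ln_increasing; lra).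
  assert (lx0 : 0 <= ln x) by (rewrite <- ln_1; apply lnle; lra).
  assert (lxP : ln x <= ln P) by (apply lnle; lra).
  set (v := ln x / ln P).
  assert (Hv : 0 <= v <= 1).
  { unfold v. split. apply Rdiv_le_0_compat; lra.
    apply (Rmult_le_reg_r (ln P)); auto. unfold Rdiv. rewrite Rmult_assoc, Rinv_l; lra. }
  pose proof (convex_exp v (- ln H) Hv) as c1.
  pose proof (convex_exp v (ln P - ln H) Hv) as c2.
  rewrite exp_Ropp, exp_ln in c1 by lra.
  assert (ePH : exp (ln P - ln H) = P * / H).
  { unfold Rminus. rewrite exp_plus, exp_Ropp, !exp_ln by lra. auto. }
  rewrite ePH in c2.
  assert (ex : exp (v * ln P) = x).
  { unfold v. unfold Rdiv. rewrite Rmult_assoc, Rinv_l by lra. rewrite Rmult_1_r. apply exp_ln; lra. }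
  assert (e1 : exp (v * (ln P - ln H)) = x * exp (v * - ln H)).
  { rewrite <- ex, <- exp_plus. f_equal. ring. }
  rewrite e1 in c2.
  assert (S : (1 + x) * exp (v * - ln H) <= 2).
  { assert (v * / H + (1 - v) + (v * (P * / H) + (1 - v)) = 2).
    { unfold H. field. lra. }
    lra. }
  assert (e2 : exp (ln H / ln P * ln x) * exp (v * - ln H) = 1).
  { rewrite <- exp_plus. replace (ln H / ln P * ln x + v * - ln H) with 0 by (unfold v; field; lra).
    apply exp_0. }
  pose proof (exp_pos (ln H / ln P * ln x)).
  pose proof (exp_pos (v * - ln H)).
  nra.
Qed.

Lemma gbound P g : 1 < P -> 1 <= g <= P ->
  g <= 2 * exp (ln ((P+1)/2) / ln P * ln g).
Proof.
  intros HP Hg. set (H := (P+1)/2). assert (HH : 1 < H) by (unfold H; lra).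
  assert (lP : 0 < ln P) by (rewrite <- ln_1; apply ln_increasing; lra).
  assert (lg0 : 0 <= ln g) by (rewrite <- ln_1; apply lnle; lra).
  assert (lgP : ln g <= ln P) by (apply lnle; lra).
  assert (lHP : ln H <= ln P) by (apply lnle; unfold H; lra).
  set (c := ln H / ln P).
  assert (Hc : 0 <= 1 - c <= 1).
  { unfold c. split.
    - assert (ln H / ln P <= 1); [|lra].
      apply (Rmult_le_reg_r (ln P)); auto. unfold Rdiv. rewrite Rmult_assoc, Rinv_l; lra.
    - assert (0 <= ln H / ln P); [|lra]. apply Rdiv_le_0_compat; [|lra].
      rewrite <- ln_1. apply lnle; lra. }
  assert (e : g = exp (c * ln g) * exp ((1-c) * ln g)).
  { rewrite <- exp_plus. replace (c * ln g + (1 - c) * ln g) with (ln g) by ring. rewrite exp_ln; lra. }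
  assert (b : exp ((1-c) * ln g) <= 2).
  { apply Rle_trans with (exp ((1-c) * ln P)).
    - apply exple. apply Rmult_le_compat_l; lra.
    - replace ((1-c) * ln P) with (ln P - ln H) by (unfold c; field; lra).
      unfold Rminus. rewrite exp_plus, exp_Ropp, !exp_ln by lra.
      apply (Rmult_le_reg_r H); [lra|]. rewrite Rmult_assoc, Rinv_l by lra. unfold H. lra. }
  pose proof (exp_pos (c * ln g)). rewrite e at 1. fold c. nra.
Qed.

End MF.
Import MF.

Module MG2.
Local Open Scope nat_scope.

Lemma decomp p : 2 <= p -> forall m, 0 < m -> exists t w, m = p^t * w /\ ~ Nat.divide p w.
Proof.
  intros Hp m. induction m as [m IH] using lt_wf_ind. intros Hm.
  destruct (Nat.eq_dec (m mod p) 0) as [E|E].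
  - assert (Hd : m = p * (m / p)) by (pose proof (Nat.div_mod m p ltac:(lia)); lia).
    destruct (IH (m / p)) as [t [w [H1 H2]]].
    + apply Nat.div_lt; lia.
    + nia.
    + exists (S t), w. split; auto. rewrite Hd, H1. simpl. ring.
  - exists 0, m. split; [simpl; lia|]. intros Hd. apply E. apply (proj2 (Nat.mod_divide m p ltac:(lia))). auto.
Qed.

Lemma find_j p g a : 2 <= p -> 0 < g -> g <= a -> exists j, g * p^j <= a < g * p^(S j).
Proof.
  intros Hp Hg Ha. induction Ha.
  - exists 0. simpl. nia.
  - destruct IHHa as [j [H1 H2]].
    destruct (Nat.eq_dec (S m) (g * p^(S j))) as [E|E].
    + exists (S j). split; [lia|]. rewrite (Nat.pow_succ_r' p (S j)). nia.
    + exists j. lia.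
Qed.

Lemma order_le p al ga : prime (Z.of_nat p) -> Nat.gcd p al = 1 ->
  is_mult_order p al ga -> ga <= p - 1.
Proof.
  intros Hp Hg [Hga [Hpow Hmin]]. pose proof (prime_ge2 _ Hp).
  assert (length (map (fun k => al ^ k mod p) (seq 0 ga)) <= length (seq 1 (p-1))).
  { apply NoDup_incl_length.
    - apply NoDup_map_NoDup_ForallPairs; [|apply seq_NoDup].
      assert (Hinj : forall x y, x < y < ga -> al ^ x mod p = al ^ y mod p -> False).
      { intros x y Hxy Heq. apply (Hmin (y - x)); [lia|].
        assert (Hy : al ^ y = al ^ x * al ^ (y - x)) by (rewrite <- Nat.pow_add_r; f_equal; lia).
        assert (1 <= al ^ (y - x)).
        { apply Nat.neq_0_lt_0, Nat.pow_nonzero. intros ->. rewrite Nat.gcd_0_r in Hg. lia. }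
        apply eq_sym, mod_eq_div in Heq; [|lia|rewrite Hy; nia].
        rewrite Hy in Heq.
        replace (al ^ x * al ^ (y - x) - al ^ x) with (al ^ x * (al ^ (y - x) - 1)) in Heq
          by (rewrite Nat.mul_sub_distr_l; lia).
        rewrite <- (Nat.pow_1_r p) in Heq.
        apply (cancel_pow p al x 1) in Heq; auto.
        rewrite Nat.pow_1_r in Heq. destruct Heq as [K HK].
        replace (al ^ (y - x)) with (1 + K * p) by lia.
        rewrite Nat.Div0.mod_add. auto. }
      intros x y Hx Hy Hxy. apply in_seq in Hx, Hy.
      destruct (Nat.lt_trichotomy x y) as [L|[L|L]]; auto.
      + exfalso. apply (Hinj x y); auto; lia.
      + exfalso. apply (Hinj y x); auto; lia.
    - intros r Hr. apply in_map_iff in Hr. destruct Hr as [k [<- _]].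
      apply in_seq. split.
      + destruct (Nat.eq_dec (al ^ k mod p) 0) as [E|E]; [|lia].
        exfalso. apply (not_div_pow p al k Hp Hg). apply (proj1 (Nat.mod_divide _ p ltac:(lia))). auto.
      + pose proof (Nat.mod_upper_bound (al ^ k) p ltac:(lia)). lia. }
  rewrite length_map, !length_seq in H0. auto.
Qed.

End MG2.
Import MG2.

Open Scope R_scope.

Theorem theorem2p9 (p alpha gamma : nat) :
  prime (Z.of_nat p) -> Nat.odd p = true ->
  (1 < alpha)%nat -> Nat.gcd p alpha = 1%nat ->
  is_mult_order p alpha gamma ->
  forall a n : nat, (1 <= a)%nat -> (1 <= n)%nat -> (gamma * p <= a)%nat ->
  INR (S_count p alpha n a) <=
    8 * (logb (INR p) (INR a)) ^ (n - 1) *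
    Rpower (INR a) (logb (INR p) ((INR p + 1) / 2)).
Proof.
  intros Hp Ho Hal Hg Hord a n Ha Hn Hga.
  pose proof (prime_ge2 _ Hp) as Hp2.
  pose proof (order_le _ _ _ Hp Hg Hord) as Hgp.
  destruct Hord as [Hg0 [Hpow Hmin]].
  destruct (proj1 (Nat.odd_spec p) Ho) as [k Hk].
  set (h := (k + 1)%nat). assert (Hh : (p + 1 = 2 * h)%nat) by (unfold h; lia).
  assert (Hb2 : (2 <= alpha ^ gamma)%nat).
  { apply Nat.le_trans with (alpha ^ 1)%nat; [rewrite Nat.pow_1_r; lia|].
    apply Nat.pow_le_mono_r; lia. }
  assert (Hm1 : (alpha ^ gamma mod p = 1)%nat) by (rewrite Hpow; apply Nat.mod_small; lia).
  assert (Hdm : (alpha ^ gamma = p * (alpha ^ gamma / p) + 1)%nat)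
    by (pose proof (Nat.div_mod (alpha ^ gamma) p ltac:(lia)); lia).
  destruct (decomp p Hp2 (alpha ^ gamma - 1) ltac:(lia)) as [t [w [Htw Hw]]].
  assert (Ht : (1 <= t)%nat).
  { destruct t; [|lia]. exfalso. apply Hw. exists (alpha ^ gamma / p)%nat.
    simpl in Htw. lia. }
  assert (Hbeta : (alpha ^ gamma = 1 + p ^ t * w)%nat) by lia.
  destruct (find_j p gamma a Hp2 Hg0 ltac:(nia)) as [j [Hj1 Hj2]].
  pose proof (count_bound p alpha gamma t w j n a Hp Ho Hg Hg0 Ht Hw Hbeta) as Hc.
  pose proof (G_bound p h Hp2 Hh j n) as HG.
  fold (S_count p alpha n a) in Hc.
  set (N := S_count p alpha n a) in *.
  set (P := (gamma * p ^ j)%nat) in *.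
  set (Q := ((a - 1) / P + 1)%nat) in *.
  assert (HP0 : (0 < P)%nat) by (unfold P; pose proof (Nat.pow_nonzero p j ltac:(lia)); nia).
  assert (HQ : (Q * P <= a + P)%nat).
  { unfold Q. pose proof (Nat.mul_div_le (a - 1) P ltac:(lia)).
    rewrite Nat.mul_add_distr_r, (Nat.mul_comm ((a-1)/P)). lia. }
  assert (HN : (N <= Q * gamma * (h ^ j * B j n))%nat).
  { eapply Nat.le_trans; [exact Hc|]. apply Nat.mul_le_mono_l. exact HG. }
  set (Pr := INR p). set (Ar := INR a). set (gr := INR gamma). set (Hr := INR h).
  assert (HPr : 3 <= Pr) by (unfold Pr; replace 3 with (INR 3) by (simpl; lra); apply le_INR; lia).
  assert (HHr : Hr = (Pr + 1) / 2).
  { unfold Hr, Pr. apply (Rmult_eq_reg_r 2); [|lra]. 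
    replace ((INR p + 1) / 2 * 2) with (INR (p + 1)) by (rewrite plus_INR; simpl; field).
    rewrite Hh, mult_INR. simpl. ring. }
  assert (Hgr : 1 <= gr <= Pr).
  { unfold gr, Pr. split; [replace 1 with (INR 1) by auto; apply le_INR; lia|apply le_INR; lia]. }
  assert (HPj : INR P = gr * Pr ^ j) by (unfold P, gr, Pr; rewrite mult_INR, pow_INR; auto).
  assert (HPjpos : 0 < Pr ^ j) by (apply pow_lt; lra).
  set (x := Ar / (gr * Pr ^ j)).
  assert (HAx : Ar = gr * Pr ^ j * x) by (unfold x; field; lra).
  assert (Hx : 1 <= x <= Pr).
  { assert (E1 : gr * Pr ^ j <= Ar).
    { rewrite <- HPj. unfold Ar. apply le_INR. auto. }
    assert (E2 : Ar <= gr * Pr ^ j * Pr).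
    { unfold Ar, gr, Pr. rewrite <- pow_INR, <- !mult_INR. apply le_INR.
      rewrite Nat.pow_succ_r' in Hj2. lia. }
    split.
    - apply (Rmult_le_reg_l (gr * Pr ^ j)); [nra|]. lra.
    - apply (Rmult_le_reg_l (gr * Pr ^ j)); [nra|]. lra. }
  assert (HAr : 0 < Ar) by (unfold Ar; apply lt_0_INR; lia).
  set (c := ln ((Pr + 1) / 2) / ln Pr).
  assert (lP : 0 < ln Pr) by (rewrite <- ln_1; apply ln_increasing; lra).
  pose proof (jensen Pr x ltac:(lra) Hx) as J1. fold c in J1.
  pose proof (gbound Pr gr ltac:(lra) Hgr) as J2. fold c in J2.
  assert (Hpow_eq : Rpower Ar (logb Pr ((Pr + 1) / 2)) =
                    exp (c * ln gr) * exp (c * ln x) * Hr ^ j).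
  { unfold Rpower, logb. fold c. rewrite HAx.
    rewrite !ln_mult by (try apply pow_lt; nra).
    rewrite ln_pow by lra.
    rewrite <- !exp_plus.
    replace (Hr ^ j) with (exp (INR j * ln Hr)).
    2:{ rewrite <- ln_pow by lra. apply exp_ln. apply pow_lt. lra. }
    rewrite <- exp_plus. f_equal. rewrite HHr. unfold c. field. lra. }
  assert (HQr : INR Q <= x + 1).
  { assert (INR Q * INR P <= Ar + INR P) by (unfold Ar; rewrite <- mult_INR, <- plus_INR; apply le_INR; auto).
    rewrite HPj in H. apply (Rmult_le_reg_r (gr * Pr ^ j)); [nra|]. rewrite HAx in H. nra. }
  set (L := logb Pr Ar).
  assert (HL1 : 1 <= L).
  { unfold L, logb. apply (Rmult_le_reg_r (ln Pr)); auto. unfold Rdiv. rewrite Rmult_assoc, Rinv_l by lra.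
    rewrite Rmult_1_l, Rmult_1_r. apply lnle; [lra|]. unfold Pr, Ar; apply le_INR; nia. }
  assert (HjL : INR j <= L).
  { unfold L, logb. apply (Rmult_le_reg_r (ln Pr)); auto. unfold Rdiv. rewrite Rmult_assoc, Rinv_l by lra.
    rewrite Rmult_1_r, <- ln_pow by lra. apply lnle; [apply pow_lt; lra|]. unfold Pr, Ar; rewrite <- pow_INR; apply le_INR; nia. }
  assert (HB : INR (B j n) <= 2 * L ^ (n - 1)).
  { destruct n as [|n']; [lia|]. replace (S n' - 1)%nat with n' by lia.
    destruct j as [|j'].
    - simpl. pose proof (pow_R1_Rle L n' HL1). lra.
    - eapply Rle_trans. apply le_INR, B_le; lia.
      rewrite mult_INR, pow_INR. simpl (INR 2). apply Rmult_le_compat_l; [lra|].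
      apply pow_incr. split; [apply pos_INR|auto]. }
  assert (HNr : INR N <= INR Q * gr * (Hr ^ j * INR (B j n))).
  { unfold gr, Hr. rewrite <- pow_INR, <- !mult_INR. apply le_INR. auto. }
  fold Pr. fold Ar. fold L. rewrite HHr in *.
  pose proof (exp_pos (c * ln gr)). pose proof (exp_pos (c * ln x)).
  assert (HHj : 0 < ((Pr + 1) / 2) ^ j) by (apply pow_lt; lra).
  assert (HB0 : 0 <= INR (B j n)) by apply pos_INR.
  assert (HQ0 : 0 <= INR Q) by apply pos_INR.
  set (E1 := exp (c * ln gr)) in *. set (E2 := exp (c * ln x)) in *.
  set (HJ := ((Pr + 1) / 2) ^ j) in *.
  rewrite Hpow_eq.
  assert (S1 : INR Q * gr <= (2 * E2) * (2 * E1)).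
  { apply Rle_trans with ((x + 1) * gr); [apply Rmult_le_compat_r; lra|].
    apply Rmult_le_compat; lra. }
  assert (S2 : INR Q * gr * (HJ * INR (B j n)) <= (2 * E2) * (2 * E1) * (HJ * (2 * L ^ (n - 1)))).
  { apply Rmult_le_compat; try nra; apply Rmult_le_compat_l; lra. }
  lra.
Qed.
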